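(* Let $Q\subseteq\mathbb{R}^n$ be a convex set, $f:Q\to\mathbb{R}$ a convex function, and consider the problem $\min_{x\in Q}f(x)$ with a solution $x_*$. Let $\|\cdot\|$ be a norm on $\mathbb{R}^n$, let $d$ be a differentiable function that is $1$-strongly convex with respect to $\|\cdot\|$, and let $V(x,y)=d(x)-d(y)-\langle\nabla d(y),x-y\rangle$ be the associated Bregman divergence. Let $L>0$, $\delta\ge0$, $\tilde\delta\ge0$, and suppose that at every point $x\in Q$ we are given a $(\delta,L)$-model $(f_\delta(x);\psi_\delta(\cdot,x))$ of $f$, i.e. $\psi_\delta(\cdot,x)$ is convex on $Q$, $\psi_\delta(x,x)=0$, and for all $y\in Q$ $$0\le f(y)-\bigl(f_\delta(x)+\psi_\delta(y,x)\bigr)\le\frac{L}{2}\|y-x\|^2+\delta.$$ Starting from $x^0\in Q$, let the points $x^{k+1}\in Q$, $k=0,1,\dots$, be inexact minimizers of $\Psi(x,x^k):=\psi_\delta(x,x^k)+L\,V(x,x^k)$ over $x\in Q$ in the following sense: there exists a subgradient $g^{k+1}\in\partial_x\Psi(x,x^k)\big|_{x=x^{k+1}}$ with $$\langle g^{k+1},x^{k+1}-x_*\rangle\le\tilde\delta.$$ Let $R^2=V(x_*,x^0)$ and $\bar x^N=\frac{1}{N}\sum_{k=1}^N x^k$. Then for every $N\ge1$ $$f(\bar x^N)-f(x_* )\le\frac{LR^2}{N}+\tilde\delta+2\delta,$$ and moreover $V(x_*,x^m)\le V(x_*,x^0)$ for every $m\ge1$ such that $f(\bar x^m)-f(x_*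 )\ge\tilde\delta+2\delta$.
   Context: If the solution $x_*$ is not unique, the estimates hold in particular for the solution $x_*$ minimizing $R^2=V(x_*,x^0)$ (the inexactness condition being understood with this $x_*$). *)

(* Defs.v *)
From HB Require Import structures.
From mathcomp Require Import all_boot all_order all_algebra.
From mathcomp Require Import all_classical all_reals all_analysis.
Set Implicit Arguments. Unset Strict Implicit. Unset Printing Implicit Defensive.
Import Order.TTheory GRing.Theory Num.Theory.
Import numFieldNormedType.Exports.
Local Open Scope ring_scope.
Local Open Scope classical_set_scope.

Section Defs.
Variables (R : realType) (n : nat).
Notation vec := 'rV[R]_n.

Definition dotv (u v : vec) : R := \sum_(i < n) u ord0 i * v ord0 i.

Definition is_norm (N : vec -> R) : Prop :=
  [/\ forall x, 0 <= N x,
      forall x, N x = 0 -> x = 0,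
      forall (a : R) x, N (a *: x) = `|a| * N x
    & forall x y, N (x + y) <= N x + N y].

Definition convex_fun_on (Q : set vec) (f : vec -> R) : Prop :=
  forall x y (t : R), Q x -> Q y -> 0 <= t <= 1 ->
    f (t *: x + (1 - t) *: y) <= t * f x + (1 - t) * f y.

(* Bregman divergence V(x,y) = d x - d y - <grad d(y), x - y>,
   where <grad d(y), h> is the differential 'd d y applied to h *)
Definition bregman (d : vec -> R) (x y : vec) : R :=
  d x - d y - 'd d y (x - y).

Definition strongly_convex1 (Q : set vec) (N : vec -> R) (d : vec -> R) : Prop :=
  (forall y, Q y -> differentiable d y) /\
  forall x y, Q x -> Q y -> d y + 'd d y (x - y) + 2^-1 * N (x - y) ^+ 2 <= d x.

Definition dL_model (Q : set vec) (N : vec -> R) (f fd : vec -> R)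
  (psi : vec -> vec -> R) (delta L : R) : Prop :=
  forall x, Q x ->
    [/\ convex_fun_on Q (fun y => psi y x), psi x x = 0
      & forall y, Q y ->
          0 <= f y - (fd x + psi y x) <= L / 2 * N (y - x) ^+ 2 + delta].

Definition subgrad_on (Q : set vec) (h : vec -> R) (z g : vec) : Prop :=
  forall y, Q y -> h z + dotv g (y - z) <= h y.

Definition avg_iter (x : nat -> vec) (N : nat) : vec :=
  (N%:R)^-1 *: \sum_(1 <= k < N.+1) x k.

End Defs.

(* Main.v *)
Require Import Defs.
From HB Require Import structures.
From mathcomp Require Import all_boot all_order all_algebra.
From mathcomp Require Import all_classical all_reals all_analysis.
From mathcomp Require Import ring lra.
Import Order.TTheory GRing.Theory Num.Theory.
Import numFieldNormedType.Exports.
Local Open Scope ring_scope.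
Local Open Scope classical_set_scope.

Lemma convQ (R:realType) n (Q : set 'rV[R]_n) : convex_set Q -> forall x y t, Q x -> Q y -> 0<=t -> t<=1 -> Q (t *: x + (1-t) *: y).
Proof. move=> cQ x y t Qx Qy t0 t1. have := cQ x y (Itv01 t0 t1). rewrite !inE => /(_ Qx Qy). done. Qed.

Lemma diff_small (R:realType) n (d : 'rV[R]_n -> R) (x v : 'rV[R]_n) (e:R) : differentiable d x -> 0 < e ->
  exists t z, [/\ 0 < t, t <= 1, z = x + t *: v & d z - d x - t * 'd d x v <= e * t].
Proof.
move=> Hd e0.
have dv := @diff_derivable _ _ _ d x v Hd.
have : (fun h : R => h^-1 *: ((d \o shift x) (h *: v) - d x)) @ 0^' --> 'D_v d x := dv.
rewrite deriveE //.
move/cvgrPdist_lt => /(_ e e0).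
move=> H. move: H => /nbhs_ballP[r /= r0 Hr].
set t := Num.min (r/2) 1.
have t0 : 0 < t by rewrite lt_min ltr01 andbT divr_gt0.
have tr : t < r.
  by rewrite /t gt_min ltr_pdivrMr // ltr_pMr // ltr1n.
have := Hr t. rewrite /ball /= sub0r normrN gtr0_norm // => /(_ tr (lt0r_neq0 t0)).
rewrite distrC => /(le_lt_trans (ler_norm _)) /ltW H.
exists t, (x + t *: v); split => //; first by rewrite /t ge_min lexx orbT.
rewrite [x + _]addrC.
have -> : d (t *: v + x) - d x - t * 'd d x v = t * (t^-1 *: (d (t *: v + x) - d x) - 'd d x v).
  rewrite mulrBr /GRing.scale /= mulrA mulfV ?mul1r //; exact: lt0r_neq0.
by rewrite mulrC ler_pM2r.
Qed.


Lemma dotvZ (R:realType) n (g v : 'rV[R]_n) t : dotv g (t *: v) = t * dotv g v.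
Proof. rewrite /dotv mulr_sumr; apply: eq_bigr => i _; rewrite mxE; ring. Qed.

Lemma dD (R:realType) n (d : 'rV[R]_n -> R) x u v : 'd d x (u + v) = 'd d x u + 'd d x v.
Proof. exact: linearD. Qed.
Lemma dZ (R:realType) n (d : 'rV[R]_n -> R) x t u : 'd d x (t *: u) = t * 'd d x u.
Proof. exact: linearZ. Qed.
Lemma d0 (R:realType) n (d : 'rV[R]_n -> R) x : 'd d x 0 = 0.
Proof. exact: linear0. Qed.

Lemma lin_shift (R:realType) n (d : 'rV[R]_n -> R) (x0 x1 y a : 'rV[R]_n) t :
  'd d x0 (x1 + t *: (y - x1) - a) = 'd d x0 (x1 - a) + t * 'd d x0 (y - x1).
Proof.
have -> : x1 + t *: (y - x1) - a = (x1 - a) + t *: (y - x1) by rewrite addrAC.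
by rewrite dD dZ.
Qed.

Lemma lin_split (R:realType) n (d : 'rV[R]_n -> R) (x0 x1 y a : 'rV[R]_n) :
  'd d x0 (y - a) = 'd d x0 (x1 - a) + 'd d x0 (y - x1).
Proof.
have -> : y - a = (x1 - a) + (y - x1) by apply/rowP => i; rewrite !mxE; ring.
by rewrite dD.
Qed.

Lemma alg_aff (R:realType) (t dz dx0 dx1 dy a b c : R) : (dz - dx0 - (a + t*b)) - (dz - dx1 - t*c) = t*((dy - dx0 - (a + b)) - (dy - dx1 - c)) + (1-t)*(dx1 - dx0 - a).
Proof. ring. Qed.

Lemma breg_aff (R:realType) n (d : 'rV[R]_n -> R) (x0 x1 y z : 'rV[R]_n) t :
  z = x1 + t *: (y - x1) ->
  bregman d z x0 - bregman d z x1  =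
   t * (bregman d y x0 - bregman d y x1) + (1-t) * bregman d x1 x0.
Proof.
move=> hz.
have E1 : 'd d x0 (z - x0) = 'd d x0 (x1 - x0) + t * 'd d x0 (y - x1).
  rewrite hz. exact: lin_shift.
have E4 : 'd d x1 (x1 - x1) = 0 by rewrite subrr d0.
have E2 : 'd d x1 (z - x1) = t * 'd d x1 (y - x1).
  have -> : 'd d x1 (z - x1) = 'd d x1 (x1 - x1) + t * 'd d x1 (y - x1).
    rewrite hz. exact: lin_shift.
  by rewrite E4 add0r.
have E3 : 'd d x0 (y - x0) = 'd d x0 (x1 - x0) + 'd d x0 (y - x1).
  exact: lin_split.
have B1 : bregman d z x0 = d z - d x0 - ('d d x0 (x1 - x0) + t * 'd d x0 (y - x1)) by rewrite -E1.
have B2 : bregman d z x1 = d z - d x1 - t * 'd d x1 (y - x1) by rewrite -E2.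
have B3 : bregman d y x0 = d y - d x0 - ('d d x0 (x1 - x0) + 'd d x0 (y - x1)) by rewrite -E3.
have B5 : bregman d x1 x0 = d x1 - d x0 - 'd d x0 (x1 - x0) by [].
have B6 : bregman d y x1 = d y - d x1 - 'd d x1 (y - x1) by [].
rewrite B1 B2 B3 B5 B6.
exact: alg_aff.
Qed.

Lemma fin_alg (R:realType) (t L e P1 Py Pz B10 G By1 By0 Bz0 Bz1 : R) :
  0 < t ->
  P1 + L*B10 + t*G <= Pz + L*Bz0 ->
  Pz <= t*Py + (1-t)*P1 ->
  L*Bz0 - L*Bz1 = L*(t*(By0 - By1) + (1-t)*B10) ->
  L*Bz1 <= e*t ->
  P1 + L*B10 + G + L*By1 <= Py + L*By0 + e.
Proof.
move=> t0 h1 h2 h3 h4.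
have : t * (P1 + L*B10 + G + L*By1 - (Py + L*By0 + e)) <= 0 by nra.
by rewrite pmulr_rle0 // subr_le0.
Qed.

Lemma sub3 (R:realType) n (Q : set 'rV[R]_n) (d psi : 'rV[R]_n -> R) (L:R) (x0 x1 g y : 'rV[R]_n) :
 convex_set Q -> convex_fun_on Q psi -> differentiable d x1 -> 0 < L -> Q x1 -> Q y ->
 subgrad_on Q (fun z => psi z + L * bregman d z x0) x1 g ->
 psi x1 + L * bregman d x1 x0 + dotv g (y - x1) + L * bregman d y x1
   <= psi y + L * bregman d y x0.
Proof.
move=> cQ cpsi dd L0 Qx1 Qy sg.
apply/ler_addgt0Pr => e e0.
have eL : 0 < e / L by rewrite divr_gt0.
have [t [z [t0 t1 hz Ht]]] := @diff_small _ _ d x1 (y - x1) (e / L) dd eL.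
have ez : z = t *: y + (1 - t) *: x1.
  by rewrite hz; apply/rowP => i; rewrite !mxE; ring.
have ezx : z - x1 = t *: (y - x1).
  by rewrite hz; apply/rowP => i; rewrite !mxE; ring.
have Qz : Q z by rewrite ez; apply: convQ => //; exact: ltW.
have sgz := sg z Qz. rewrite /= ezx dotvZ in sgz.
have cz : psi z <= t * psi y + (1 - t) * psi x1.
  rewrite ez; apply: cpsi => //; rewrite (ltW t0) t1 //.
have aff := @breg_aff _ _ d x0 x1 y z t hz.
have bz : L * bregman d z x1 <= e * t.
  have -> : bregman d z x1 = d z - d x1 - t * 'd d x1 (y - x1).
    by rewrite /bregman ezx dZ.
  have iL : 0 < L^-1 by rewrite invr_gt0.
  rewrite -(ler_pM2l iL) mulrA mulVf ?mul1r; last exact: lt0r_neq0.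
  have -> : L^-1 * (e*t) = e / L * t by ring.
  exact: Ht.
eapply fin_alg; [exact: t0|exact: sgz|exact: cz| |exact: bz].
by rewrite -mulrBr aff.
Qed.

Lemma dotvN (R:realType) n (g a b : 'rV[R]_n) : dotv g (a - b) = - dotv g (b - a).
Proof. rewrite /dotv -sumrN; apply: eq_bigr => i _; rewrite !mxE; ring. Qed.

Lemma step_alg (R:realType) (F1 Fs FD P1 Ps Nsq B1 Bs0 Bs1 Gd L td del : R) :
  0 < L ->
  F1 - (FD + P1) <= L/2 * Nsq + del ->
  0 <= Fs - (FD + Ps) ->
  2^-1 * Nsq <= B1 ->
  P1 + L*B1 + (-Gd) + L*Bs1 <= Ps + L*Bs0 ->
  Gd <= td ->
  F1 <= Fs + (L*Bs0 - L*Bs1) + (td + del).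
Proof. move=> L0 h1 h2 h3 h4 h5. have : L * (2^-1 * Nsq) <= L * B1 by rewrite ler_pM2l. nra. Qed.

Lemma sc_alg (R:realType) (dx dy l Nsq : R) :
  dy + l + 2^-1 * Nsq <= dx -> 2^-1 * Nsq <= dx - dy - l.
Proof. lra. Qed.

Lemma jensen (R:realType) n (Q : set 'rV[R]_n) (f : 'rV[R]_n -> R) (x : nat -> 'rV[R]_n) :
  convex_set Q -> convex_fun_on Q f -> (forall k, Q (x k)) ->
  forall N, Q (avg_iter x N.+1) /\
    f (avg_iter x N.+1) <= (N.+1%:R)^-1 * \sum_(1 <= k < N.+2) f (x k).
Proof.
move=> cQ cf Qx; elim=> [|N [QA fA]].
  rewrite /avg_iter !big_nat1 invr1 scale1r mul1r; split => //.
set m : R := N.+1%:R.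
have m0 : 0 < m by rewrite /m ltr0n.
have em : N.+2%:R = m + 1 :> R by rewrite /m natr1.
set t : R := (m + 1)^-1.
have t0 : 0 <= t by rewrite /t invr_ge0; lra.
have t1 : t <= 1 by rewrite /t invf_le1; lra.
have eA : avg_iter x N.+2 = t *: x N.+2 + (1 - t) *: avg_iter x N.+1.
  rewrite /avg_iter (@big_nat_recr _ _ _ N.+2) //= -/m em /t.
  move: (\sum_(1 <= i < N.+2) x i) => S.
  apply/rowP => i; rewrite !mxE. field. apply/andP; split; apply/lt0r_neq0 => //; lra.
rewrite eA; split; first exact: convQ.
apply: (le_trans (cf _ _ _ (Qx _) QA _)); first by rewrite t0 t1.
rewrite (@big_nat_recr _ _ _ N.+2) //= -/m em -/t.
move: fA; rewrite -/m.
move: (\sum_(1 <= i < N.+2) f (x i)) => S fA.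
have -> : (1 - t) = m * t by rewrite /t; field; apply/lt0r_neq0; lra.
have hmt : 0 <= m * t by rewrite mulr_ge0 // ltW.
have : m * t * f (avg_iter x N.+1) <= m * t * (m^-1 * S) by rewrite ler_wpM2l.
have -> : m * t * (m^-1 * S) = t * S by field; apply/lt0r_neq0.
lra.
Qed.

Lemma sum_steps (R:realType) (F B : nat -> R) (Fs L c : R) :
  (forall k, F k.+1 <= Fs + (L * B k - L * B k.+1) + c) ->
  forall N, \sum_(1 <= k < N.+1) F k <= N%:R * Fs + (L * B 0%N - L * B N) + N%:R * c.
Proof.
move=> h; elim=> [|N IH].
  by rewrite big_geq // !mul0r subrr !addr0.
rewrite (@big_nat_recr _ _ _ N.+1) //= -natr1.
have := h N. lra.
Qed.

Lemma final1 (R:realType) (m A S Fs L B0 BN td del : R) :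
  0 < m -> A <= m^-1 * S -> S <= m * Fs + (L*B0 - L*BN) + m * (td + del) ->
  0 < L -> 0 <= BN -> 0 <= del ->
  A - Fs <= L * B0 / m + td + 2 * del /\
  (td + 2 * del <= A - Fs -> BN <= B0).
Proof.
move=> m0 hA hS L0 BN0 d0.
have im0 : 0 < m^-1 by rewrite invr_gt0.
have hA' : A <= Fs + m^-1 * (L*B0 - L*BN) + (td + del).
  apply: (le_trans hA).
  have : m^-1 * S <= m^-1 * (m * Fs + (L*B0 - L*BN) + m * (td + del)) by rewrite ler_pM2l.
  have -> : m^-1 * (m * Fs + (L*B0 - L*BN) + m * (td + del)) = Fs + m^-1 * (L*B0 - L*BN) + (td + del).
    by field; apply/lt0r_neq0.
  done.
have e1 : L * B0 / m = m^-1 * (L * B0) by rewrite mulrC.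
split.
  rewrite e1. have : 0 <= m^-1 * (L * BN) by rewrite mulr_ge0 // ?mulr_ge0 // ltW.
  rewrite mulrBr in hA'. lra.
move=> h.
have : 0 <= m^-1 * (L*B0 - L*BN) by lra.
by rewrite pmulr_rge0 // subr_ge0 ler_pM2l.
Qed.

Theorem theorem3p1 (R : realType) (n : nat) (Q : set 'rV[R]_n)
  (f : 'rV[R]_n -> R) (N : 'rV[R]_n -> R) (d : 'rV[R]_n -> R)
  (fd : 'rV[R]_n -> R) (psi : 'rV[R]_n -> 'rV[R]_n -> R)
  (L delta tdelta : R) (xs : 'rV[R]_n) (x : nat -> 'rV[R]_n) :
  convex_set Q -> convex_fun_on Q f ->
  Q xs -> (forall y, Q y -> f xs <= f y) ->
  is_norm N -> strongly_convex1 Q N d ->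
  0 < L -> 0 <= delta -> 0 <= tdelta ->
  dL_model Q N f fd psi delta L ->
  (forall k, Q (x k)) ->
  (forall k, exists g : 'rV[R]_n,
      subgrad_on Q (fun z => psi z (x k) + L * bregman d z (x k)) (x k.+1) g /\
      dotv g (x k.+1 - xs) <= tdelta) ->
  (forall Nit : nat, (1 <= Nit)%N ->
     f (avg_iter x Nit) - f xs
       <= L * bregman d xs (x 0%N) / Nit%:R + tdelta + 2 * delta) /\
  (forall m : nat, (1 <= m)%N ->
     tdelta + 2 * delta <= f (avg_iter x m) - f xs ->
     bregman d xs (x m) <= bregman d xs (x 0%N)).
Proof.
move=> cQ cf Qxs fmin Nn sc L0 del0 td0 model Qx sub.
have dif : forall y, Q y -> differentiable d y := sc.1.
have step : forall k, f (x k.+1) <= f xs + (L * bregman d xs (x k) - L * bregman d xs (x k.+1)) + (tdelta + delta).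
  move=> k. have [g [sg hg]] := sub k.
  have [cpsi _ hm] := model (x k) (Qx k).
  have /andP[_ h1] := hm _ (Qx k.+1).
  have /andP[h2 _] := hm _ Qxs.
  have h3' : 2^-1 * N (x k.+1 - x k) ^+ 2 <= bregman d (x k.+1) (x k) := @sc_alg _ _ _ _ _ (sc.2 _ _ (Qx k.+1) (Qx k)).
  have h4 := @sub3 _ _ Q d (fun z => psi z (x k)) L (x k) (x k.+1) g xs cQ cpsi (dif _ (Qx k.+1)) L0 (Qx k.+1) Qxs sg.
  rewrite /= dotvN in h4.
  exact: (@step_alg R _ _ _ _ _ _ _ _ _ _ L tdelta delta L0 h1 h2 h3' h4 hg).
have hs := @sum_steps R (fun k => f (x k)) (fun k => bregman d xs (x k)) (f xs) L (tdelta + delta) step.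
have BN0 : forall k, 0 <= bregman d xs (x k).
  move=> k; apply: le_trans (@sc_alg _ _ _ _ _ (sc.2 _ _ Qxs (Qx k))).
  by rewrite mulr_ge0 // ?invr_ge0 ?ler0n // sqr_ge0.
have key : forall M, f (avg_iter x M.+1) - f xs <= L * bregman d xs (x 0%N) / M.+1%:R + tdelta + 2 * delta /\
  (tdelta + 2 * delta <= f (avg_iter x M.+1) - f xs -> bregman d xs (x M.+1) <= bregman d xs (x 0%N)).
  move=> M; have [_ fA] := @jensen _ _ Q f x cQ cf Qx M.
  apply: (@final1 R _ _ _ _ _ _ _ _ _ _ fA (hs M.+1) L0 (BN0 _) del0).
  by rewrite ltr0n.
split.
  by case=> [//|M] _; exact: (key M).1.
by case=> [//|M] _; exact: (key M).2.
Qed.
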